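(* Let $\mathbb{F}$ be a field of characteristic zero, $d\ge 1$, $n\geq 2$, and let $\mathbf{b}=(b_1,\dots,b_n)\in\mathbb{N}_+^n$ with $b_1=1$ and $b_n>\dots>b_2\geq 2$. Let $\mathbf{c}_i=(c_{i,1},\dots,c_{i,n})\in\mathbb{F}^n$ for $i=1,\dots,d$, where $c_{1,1},\dots,c_{d,1}$ are not all zero. For $m=0,1,\dots,b_n$ let $$q_{n,m}=\sum_{\tau(\pmb\gamma_1,\dots,\pmb\gamma_d)=m}\frac{\mathbf{c}_1^{\pmb\gamma_1}\cdots\mathbf{c}_d^{\pmb\gamma_d}}{\pmb\gamma_1!\cdots\pmb\gamma_d!}x_1^{|\pmb\gamma_1|}\cdots x_d^{|\pmb\gamma_d|}\in\mathbb{F}[x_1,\dots,x_d],$$ and let $Q=\mathrm{span}\{q_{n,m}: m=0,1,\dots,b_n\}$ (a $D$-invariant subspace). Then the breadth of $Q$ is $1$.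
   Context: The sum runs over $\pmb\gamma_i=(\gamma_{i,1},\dots,\gamma_{i,n})\in\mathbb{N}^n$ ($i=1,\dots,d$), with $|\pmb\gamma_i|=\sum_j\gamma_{i,j}$, $\pmb\gamma_i!=\prod_j\gamma_{i,j}!$, $\mathbf{c}_i^{\pmb\gamma_i}=\prod_{j=1}^n c_{i,j}^{\gamma_{i,j}}$ (with the convention $0^0=1$), and $\tau(\pmb\gamma_1,\dots,\pmb\gamma_d)=\sum_{j=1}^n b_j\sum_{i=1}^d\gamma_{i,j}$. A polynomial subspace is $D$-invariant if it is closed under all partial derivatives $\partial/\partial x_j$. The breadth of a $D$-invariant polynomial subspace is the number of linear polynomials in a basis of it, maximized over bases; concretely it is the dimension of the space of degree-one homogeneous parts of the polynomials of total degree at most one in the subspace. *)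

(* Defs.v *)
From HB Require Import structures.
From mathcomp Require Import all_boot all_order all_algebra.
From mathcomp Require Import mpoly.
Set Implicit Arguments. Unset Strict Implicit. Unset Printing Implicit Defensive.
Import Order.TTheory GRing.Theory.
Local Open Scope ring_scope.

Section Defs.
Variables (F : fieldType) (d n : nat).

(* Indices are 0-based: variable i : 'I_d is x_{i+1}, coordinate j : 'I_n is j+1. *)

Definition tau (b : nat -> nat) (g : 'I_d -> 'I_n -> nat) : nat :=
  (\sum_(j < n) b j * \sum_(i < d) g i j)%N.

(* q_{n,m}: sum over all (gamma_1..gamma_d) in N^{d x n} with tau = m.  Each
   entry of such a gamma is at most m since all b_j >= 1, so we enumerate
   gamma with entries in 'I_(m.+1). *)
Definition qnm (b : nat -> nat) (c : 'I_d -> 'I_n -> F) (m : nat)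
  : {mpoly F[d]} :=
  \sum_(g : {ffun 'I_d -> {ffun 'I_n -> 'I_m.+1}}
          | tau b (fun i j => nat_of_ord (g i j)) == m)
    ((\prod_(i < d) \prod_(j < n)
        (c i j ^+ g i j / ((g i j)`!)%:R)) *:
     \prod_(i < d) 'X_i ^+ (\sum_(j < n) (g i j : nat))%N).

Definition in_span (k : nat) (q : nat -> {mpoly F[d]}) (p : {mpoly F[d]}) :=
  exists a : 'I_k -> F, p = \sum_(m < k) a m *: q m.

Definition linpart (p : {mpoly F[d]}) : 'rV[F]_d :=
  \row_(i < d) p@_(U_(i)%MM).

(* breadth of the subspace Q (given by its membership predicate) is r:
   the space { linpart p | p in Q, total degree p <= 1 } has dimension r,
   i.e. it is the row space of some r x d matrix with independent rows. *)
Definition breadth_is (Q : {mpoly F[d]} -> Prop) (r : nat) : Prop :=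
  exists B : 'M[F]_(r, d), row_free B /\
    forall u : 'rV[F]_d,
      (u <= B)%MS <-> exists p, Q p /\ (msize p <= 2)%N /\ linpart p = u.

End Defs.

(* Main.v *)
Require Import Defs.
From HB Require Import structures.
From mathcomp Require Import all_boot all_order all_algebra.
From mathcomp Require Import mpoly.
From mathcomp Require Import zify.
Import GRing.Theory.
Local Open Scope ring_scope.

Section Aux.
Variables (F : fieldType) (d n : nat) (b : nat -> nat) (c : 'I_d -> 'I_n -> F).

Definition mon m (g : {ffun 'I_d -> {ffun 'I_n -> 'I_m.+1}}) : 'X_{1..d} :=
  [multinom (\sum_(j < n) (g i j : nat))%N | i < d].

Definition cf m (g : {ffun 'I_d -> {ffun 'I_n -> 'I_m.+1}}) : F :=
  \prod_(i < d) \prod_(j < n) (c i j ^+ g i j / ((g i j)`!)%:R).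

Arguments mon {m}.
Arguments cf {m}.

Lemma qnm_coef m mm : (qnm b c m)@_mm =
  \sum_(g : {ffun 'I_d -> {ffun 'I_n -> 'I_m.+1}}
          | tau b (fun i j => nat_of_ord (g i j)) == m)
    cf g * (mon g == mm)%:R.
Proof.
rewrite /qnm raddf_sum; apply: eq_bigr => g _.
rewrite /= mcoeffZ; congr (_ * _).
rewrite -mcoeffX; congr (mcoeff _ _); rewrite mpolyXE_id.
by apply: eq_bigr => i _; rewrite mnmE.
Qed.

Lemma mdeg_mon_le m g : (forall j, (j < n)%N -> 1 <= b j)%N ->
  (mdeg (@mon m g) <= tau b (fun i j => nat_of_ord (g i j)))%N.
Proof.
move=> hb; rewrite mdegE /tau.
rewrite (eq_bigr (fun i => \sum_(j < n) (g i j : nat))%N); last by move=> i _; rewrite mnmE.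
rewrite exchange_big /=; apply: leq_sum => j _.
by rewrite leq_pmull // hb.
Qed.

Lemma qnm_coef_hi m mm : (forall j, (j < n)%N -> 1 <= b j)%N ->
  (m < mdeg mm)%N -> (qnm b c m)@_mm = 0.
Proof.
move=> hb hm; rewrite qnm_coef big1 // => g /eqP ht.
case: eqP => [he|]; last by rewrite mulr0.
have := @mdeg_mon_le m g hb; rewrite he ht => h.
by move: (leq_trans hm h); rewrite ltnn.
Qed.

Section Uniq.
Variables (h0 : (0 < n)%N) (i0 : 'I_d) (m : nat).
Let j0 : 'I_n := Ordinal h0.
Definition gs : {ffun 'I_d -> {ffun 'I_n -> 'I_m.+1}} :=
  [ffun i => [ffun j : 'I_n => if (i == i0) && (val j == 0%N) then (ord_max : 'I_m.+1) else ord0]].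

Lemma gsE i j : (gs i j : nat) = if (i == i0) && (val j == 0%N) then m else 0%N.
Proof. by rewrite !ffunE; case: ifP. Qed.

Lemma sum_gs_i (j : 'I_n) : (\sum_(i < d) (gs i j : nat))%N = if val j == 0%N then m else 0%N.
Proof.
rewrite (bigD1 i0) //= big1 => [|i ne]; last by rewrite gsE (negbTE ne).
by rewrite gsE eqxx addn0.
Qed.

Lemma sum_gs_j (i : 'I_d) : (\sum_(j < n) (gs i j : nat))%N = if i == i0 then m else 0%N.
Proof.
rewrite (bigD1 j0) //= big1 => [|j ne]; last first.
  rewrite gsE; case: eqP => //= _; case: eqP => // hj; case/eqP: ne; exact: val_inj.
by rewrite gsE eqxx andbT addn0.
Qed.

Lemma tau_gs : b 0%N = 1%N -> tau b (fun i j => nat_of_ord (gs i j)) = m.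
Proof.
move=> b0; rewrite /tau (eq_bigr (fun j : 'I_n => b j * (if val j == 0%N then m else 0))%N); last by move=> j _; rewrite sum_gs_i.
rewrite (bigD1 j0) //= big1 => [|j ne]; last first.
  case: eqP => [hj|]; last by rewrite muln0.
  by case/eqP: ne; exact: val_inj.
by rewrite b0 mul1n addn0.
Qed.

Lemma mon_gs : mon gs = (U_(i0) *+ m)%MM.
Proof.
apply/mnmP => i; rewrite mnmE mulmnE mnm1E sum_gs_j eq_sym.
by case: eqP => _; rewrite ?mul1n ?mul0n.
Qed.

Lemma cf_gs : cf gs = c i0 j0 ^+ m / (m`!)%:R.
Proof.
rewrite /cf (bigD1 i0) //= [X in _ * X]big1 => [|i ne]; last first.
  by apply: big1 => j _; rewrite gsE (negbTE ne) expr0 fact0 divr1.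
rewrite mulr1 (bigD1 j0) //= big1 => [|j ne]; last first.
  rewrite gsE eqxx /=; case: eqP => [hj|]; last by rewrite expr0 fact0 divr1.
  by case/eqP: ne; exact: val_inj.
by rewrite mulr1 gsE eqxx.
Qed.

Lemma gs_uniq (g : {ffun 'I_d -> {ffun 'I_n -> 'I_m.+1}}) : b 0%N = 1%N -> (forall j, (1 <= j)%N -> (j < n)%N -> (2 <= b j)%N) ->
  tau b (fun i j => nat_of_ord (g i j)) = m -> @mon m g = (U_(i0) *+ m)%MM -> g = gs.
Proof.
move=> b0 hb ht hmon.
have hrow i : (\sum_(j < n) (g i j : nat))%N = if i == i0 then m else 0%N.
  move/mnmP: hmon => /(_ i); rewrite mnmE mulmnE mnm1E eq_sym.
  by case: eqP => _; rewrite ?mul1n ?mul0n.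
have hS : (\sum_(j < n) \sum_(i < d) (g i j : nat))%N = m.
  rewrite exchange_big /=.
  have h := congr1 mdeg hmon; rewrite mdegMn mdeg1 mul1n mdegE in h.
  apply: (etrans _ h); by apply: eq_bigr => i _; rewrite mnmE.
have hb1 (j : 'I_n) : b j = ((b j).-1 + 1)%N.
  case: (val j =P 0%N) => [->|/eqP hj]; first by rewrite b0.
  have := hb j; rewrite lt0n hj ltn_ord => /(_ isT isT); case: (b j) => //.
  by move=> k _; rewrite addn1.
have hz : (\sum_(j < n) (b j).-1 * \sum_(i < d) (g i j : nat) == 0)%N.
  move: ht; rewrite /tau (eq_bigr (fun j : 'I_n => (b j).-1 * \sum_(i < d) (g i j : nat) + \sum_(i < d) (g i j : nat))%N); last first.
    by move=> j _; rewrite {1}hb1 mulnDl mul1n.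
  rewrite big_split /= hS => h; apply/eqP; lia.
move: hz; rewrite sum_nat_eq0 => /forall_inP hz'.
have hcol (i : 'I_d) (j : 'I_n) : val j != 0%N -> (g i j : nat) = 0%N.
  move=> hj; have := hz' j isT; rewrite muln_eq0.
  have -> : ((b j).-1 == 0%N) = false.
    have := hb j; rewrite lt0n hj ltn_ord => /(_ isT isT).
    by case: (b j) => // [[|k]].
  rewrite sum_nat_eq0 => /forall_inP /(_ i isT) /eqP //.
apply/ffunP => i; apply/ffunP => j; apply/val_inj; rewrite /= gsE.
case: (val j =P 0%N) => [hj|/eqP hj]; last by rewrite andbF hcol.
rewrite andbT -hrow (bigD1 j) //= big1 ?addn0 // => k ne.
apply: hcol; apply: contra ne => /eqP hk; apply/eqP/val_inj; by rewrite /= hk hj.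
Qed.

Lemma qnm_coef_top : b 0%N = 1%N -> (forall j, (1 <= j)%N -> (j < n)%N -> (2 <= b j)%N) ->
  (qnm b c m)@_(U_(i0) *+ m) = c i0 j0 ^+ m / (m`!)%:R.
Proof.
move=> b0 hb; rewrite qnm_coef (bigD1 gs) /=; last by rewrite tau_gs.
rewrite big1 ?addr0; first by rewrite mon_gs eqxx mulr1 cf_gs.
move=> g /andP [/eqP ht ne]; case: eqP => [hm|]; last by rewrite mulr0.
by case/eqP: ne; exact: gs_uniq.
Qed.
End Uniq.
End Aux.

Theorem lemma3 (F : fieldType) (d n : nat) (b : nat -> nat)
    (c : 'I_d -> 'I_n -> F) :
  [pchar F] =i pred0 ->
  (1 <= d)%N -> (2 <= n)%N ->
  b 0%N = 1%N -> (2 <= b 1%N)%N ->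
  (forall j : nat, (1 <= j)%N -> (j.+1 < n)%N -> (b j < b j.+1)%N) ->
  (exists i : 'I_d, exists h : (0 < n)%N, c i (Ordinal h) != 0) ->
  breadth_is (in_span (b n.-1).+1 (qnm b c)) 1.
Proof.
move=> hch hd hn b0 b1 hinc [i0 [h0 hc]].
set j0 := Ordinal h0.
have hb2 : forall j, (1 <= j)%N -> (j < n)%N -> (2 <= b j)%N.
  elim=> [//|j IH] _ hj.
  case: j IH hj => [|j] IH hj; first by [].
  have := IH isT (ltnW hj); have := hinc j.+1 isT hj; lia.
have hb1 : forall j, (j < n)%N -> (1 <= b j)%N.
  by case=> [|j] hj; [rewrite b0 | have := hb2 j.+1 isT hj; lia].
set N := (b n.-1).+1.
have h1N : (1 < N)%N.
  have : (2 <= b n.-1)%N by apply: hb2; lia.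
  rewrite /N; lia.
have hfact k : ((k`!)%:R : F) != 0.
  by move/pcharf0P: hch => ->; rewrite -lt0n fact_gt0.
have hq1 i : (qnm b c 1)@_U_(i) = c i j0.
  have := @qnm_coef_top F d n b c h0 i 1 b0 hb2; rewrite GRing.mulr1n => ->.
  by rewrite expr1 divr1.
set B : 'M[F]_(1, d) := \row_i c i j0.
exists B; split.
  rewrite /row_free rank_rV; suff -> : B != 0 by [].
  apply/negP => /eqP h; move: hc.
  have := congr1 (fun M : 'M[F]_(1,d) => M 0 i0) h.
  by rewrite !mxE => ->; rewrite eqxx.
move=> u; split.
  move/sub_rVP => [a ->]; exists (a *: qnm b c 1); split; last split.
  - exists (fun k : 'I_N => if val k == 1%N then a else 0).
    rewrite (bigD1 (Ordinal h1N)) //= big1 ?addr0 // => k ne.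
    case: eqP => hk; last by rewrite scale0r.
    by case/eqP: ne; apply: val_inj.
  - apply: leq_trans (msizeZ_le _ _) _.
    rewrite msizeE; apply/bigmax_leqP_seq => mm hmm _.
    rewrite ltnS leqNgt; apply/negP => hm.
    move: hmm; rewrite mcoeff_msupp (@qnm_coef_hi F d n b c _ _ hb1) ?eqxx //.
  - apply/rowP => i; rewrite !mxE /= mcoeffZ hq1; idtac.
    by [].

move=> [p [[a hp] [hs hl]]].
have key : forall t (k : 'I_N), (2 <= k)%N -> (N <= k + t)%N -> a k = 0.
  elim=> [|t IH] k hk hkt.
    by move: (ltn_ord k) hkt; rewrite addn0; lia.
  have hz : p@_(U_(i0) *+ k)%MM = 0.
    apply/eqP; rewrite mcoeff_eq0; apply: msize_mdeg_ge.
    by rewrite mdegMn mdeg1 mul1n; exact: (leq_trans hs hk).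
  move: hz; rewrite hp raddf_sum /= (bigD1 k) //= big1 ?addr0; last first.
    move=> k' ne; rewrite mcoeffZ.
    case: (ltngtP k' k) => hkk.
    - by rewrite (@qnm_coef_hi F d n b c _ _ hb1) ?mulr0 // mdegMn mdeg1 mul1n.
    - by rewrite IH ?mul0r //; lia.
    - by case/eqP: ne; apply: val_inj.
  rewrite mcoeffZ (@qnm_coef_top F d n b c h0 i0 _ b0 hb2) => /eqP; rewrite mulf_eq0 => /orP [/eqP //|].
  by rewrite mulf_eq0 invr_eq0 (negbTE (hfact _)) orbF expf_eq0 (negbTE hc) andbF.
apply/sub_rVP; exists (a (Ordinal h1N)).
apply/rowP => i; rewrite -hl !mxE hp raddf_sum /= (bigD1 (Ordinal h1N)) //= big1 ?addr0.
  by rewrite mcoeffZ hq1.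
move=> k ne; rewrite mcoeffZ.
case: (ltngtP k 1) => hk.
- by rewrite (@qnm_coef_hi F d n b c _ _ hb1) ?mulr0 // mdeg1.
- by rewrite (key N) ?mul0r // leq_addl.
- by case/eqP: ne; apply: val_inj.
Qed.
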